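(* Let $N=2$ with $r_{11}=1$ and $g\in(-2,2)$. The Finsleroid Indicatrix $\{R\in\mathbb{R}^2: K(g;R)=1\}$ is strongly convex, i.e. it is a closed curve bounding a convex region and its (Euclidean) curvature as a plane curve is strictly positive at every point.
   Context: Here $V_2=\mathbb{R}^2$ with points $R=(R^1,R^2)$, $Z=R^2$, $q(R)=|R^1|$; $h=\sqrt{1-g^2/4}$, $G=g/h$. Define $B(g;R)=Z^2+gqZ+q^2$, $A(g;R)=Z+\frac12 gq$, $\Phi(g;R)=\arctan\big(A/(hq)\big)$ if $q>0$, $\Phi=\pi/2$ if $q=0,Z>0$, $\Phi=-\pi/2$ if $q=0,Z<0$; $J(g;R)=e^{\frac12 G\Phi}$ and the Finsleroid metric function $K(g;R)=\sqrt{B(g;R)}\,J(g;R)$ ($K(g;0)=0$). *)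

(* Defs.v *)
From Stdlib Require Import Reals Lra.
From Coquelicot Require Import Coquelicot.
Open Scope R_scope.

(* Points R = (R^1, R^2) of V_2 = R^2 are written as pairs (x, y) : R * R. *)

Definition fh (g : R) : R := sqrt (1 - g ^ 2 / 4).
Definition fG (g : R) : R := g / fh g.
Definition fq (P : R * R) : R := Rabs (fst P).
Definition fZ (P : R * R) : R := snd P.
Definition fB (g : R) (P : R * R) : R :=
  fZ P ^ 2 + g * fq P * fZ P + fq P ^ 2.
Definition fA (g : R) (P : R * R) : R := fZ P + / 2 * g * fq P.
Definition fPhi (g : R) (P : R * R) : R :=
  if Rlt_dec 0 (fq P) then atan (fA g P / (fh g * fq P))
  else if Rlt_dec 0 (fZ P) then PI / 2
  else - (PI / 2).
(* (the value of Phi at the origin is irrelevant, since B(g;0) = 0) *)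
Definition fJ (g : R) (P : R * R) : R := exp (/ 2 * fG g * fPhi g P).
Definition Kfin (g : R) (P : R * R) : R := sqrt (fB g P) * fJ g P.

Definition indicatrix (g : R) (P : R * R) : Prop := Kfin g P = 1.

Definition dist2 (P Q : R * R) : R :=
  sqrt ((fst P - fst Q) ^ 2 + (snd P - snd Q) ^ 2).

Definition convex2 (S : R * R -> Prop) : Prop :=
  forall P Q t, S P -> S Q -> 0 <= t <= 1 ->
    S ((1 - t) * fst P + t * fst Q, (1 - t) * snd P + t * snd Q).

Definition bounded2 (S : R * R -> Prop) : Prop :=
  exists M, forall P, S P -> dist2 P (0, 0) <= M.

Definition boundary2 (S : R * R -> Prop) (P : R * R) : Prop :=
  forall eps, 0 < eps ->
    (exists Q, S Q /\ dist2 P Q < eps) /\ (exists Q, ~ S Q /\ dist2 P Q < eps).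

Definition curvature (x1 y1 x2 y2 : R) : R :=
  (x1 * y2 - y1 * x2) / Rpower (x1 ^ 2 + y1 ^ 2) (3 / 2).

Definition strongly_convex_closed_curve
  (C D : R * R -> Prop) : Prop :=
  convex2 D /\ bounded2 D /\ (forall P, C P <-> boundary2 D P) /\
  exists (T : R) (x y x1 y1 x2 y2 : R -> R),
    0 < T /\
    (forall t, x (t + T) = x t /\ y (t + T) = y t) /\
    (forall t, is_derive x t (x1 t) /\ is_derive y t (y1 t) /\
               is_derive x1 t (x2 t) /\ is_derive y1 t (y2 t) /\
               continuous x2 t /\ continuous y2 t) /\
    (forall s t, 0 <= s < T -> 0 <= t < T -> x s = x t -> y s = y t -> s = t) /\
    (forall P, C P <-> exists t, P = (x t, y t)) /\
    (forall t, 0 < x1 t ^ 2 + y1 t ^ 2) /\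
    (forall t, 0 < curvature (x1 t) (y1 t) (x2 t) (y2 t)).

(* Main.v *)
Require Import Defs.
From Stdlib Require Import Reals Lra Classical.
From Coquelicot Require Import Coquelicot.
Open Scope R_scope.


Definition kk (g : R) : R := fG g / 2.

Lemma h_pos g : -2 < g < 2 -> 0 < fh g.
Proof. intros. unfold fh. apply sqrt_lt_R0. nra. Qed.

Lemma h_sq g : -2 < g < 2 -> fh g * fh g = 1 - g ^ 2 / 4.
Proof. intros. unfold fh. apply sqrt_sqrt. nra. Qed.

Lemma gk g : -2 < g < 2 -> g / 2 = kk g * fh g.
Proof. intros. pose proof (h_pos g H). unfold kk, fG. field. lra. Qed.

Lemma B_eq g P : -2 < g < 2 ->
  fB g P = fA g P ^ 2 + (fh g * fq P) ^ 2.
Proof. intros. pose proof (h_sq g H). unfold fB, fA.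
  replace ((fh g * fq P)^2) with ((fh g * fh g) * fq P ^2) by ring.
  rewrite H0. field. Qed.

Lemma polar g P : -2 < g < 2 ->
  -(PI/2) <= fPhi g P <= PI/2 /\
  fh g * fq P = sqrt (fB g P) * cos (fPhi g P) /\
  fA g P = sqrt (fB g P) * sin (fPhi g P) /\
  (0 < fq P -> -(PI/2) < fPhi g P < PI/2).
Proof.
  intros Hg. pose proof (h_pos g Hg) as Hh. pose proof PI_RGT_0.
  rewrite (B_eq g P Hg). unfold fPhi.
  destruct (Rlt_dec 0 (fq P)) as [Hq|Hq].
  - set (z := fA g P / (fh g * fq P)).
    assert (Hz : fA g P ^ 2 + (fh g * fq P) ^ 2 = (fh g * fq P) * (fh g * fq P) * (1 + z²)).
    { unfold z, Rsqr. field. split; lra. }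
    assert (Hs : sqrt (fA g P ^ 2 + (fh g * fq P) ^ 2) = (fh g * fq P) * sqrt (1 + z²)).
    { rewrite Hz. rewrite sqrt_mult. rewrite sqrt_square. auto. nra. nra.
      pose proof (Rle_0_sqr z). lra. }
    assert (Hp : 0 < sqrt (1 + z²)). { apply sqrt_lt_R0. pose proof (Rle_0_sqr z). lra. }
    pose proof (atan_bound z).
    rewrite Hs, cos_atan, sin_atan. repeat split; try lra.
    + field. lra.
    + unfold z in *. field. repeat split; lra.
  - assert (fq P = 0). { unfold fq in *. pose proof (Rabs_pos (fst P)). lra. }
    rewrite H0. replace ((fh g * 0) ^ 2) with 0 by ring. rewrite Rplus_0_r.
    assert (fA g P = fZ P). { unfold fA. rewrite H0. ring. }
    rewrite H1. replace (fZ P ^ 2) with (fZ P * fZ P) by ring.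
    rewrite <- Rsqr_def. fold (Rsqr (fZ P)). rewrite sqrt_Rsqr_abs.
    destruct (Rlt_dec 0 (fZ P)).
    + rewrite cos_PI2, sin_PI2. rewrite Rabs_right by lra. repeat split; try lra.
    + rewrite cos_neg, sin_neg, cos_PI2, sin_PI2. rewrite Rabs_left1 by lra.
      repeat split; try lra.
Qed.

Lemma K_eq g P : Kfin g P = sqrt (fB g P) * exp (kk g * fPhi g P).
Proof. unfold Kfin, fJ, kk. f_equal. f_equal. field. Qed.


Lemma KL_aux k : forall x, is_derive (fun d => exp (-(k*d)) * (cos d + k * sin d)) x
   (-(1+k^2) * exp (-(k*x)) * sin x).
Proof. intros x. auto_derive; auto. ring. Qed.

Lemma cont_of_der (f df : R -> R) x : (forall y, is_derive f y (df y)) -> continuity_pt f x.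
Proof. intros H. apply continuity_pt_filterlim. apply (@ex_derive_continuous R_AbsRing R_NormedModule).
  exists (df x). apply H. Qed.

Lemma KL k d : -PI <= d <= PI -> cos d + k * sin d <= exp (k*d).
Proof.
  intros Hd.
  assert (M : exp (-(k*d)) * (cos d + k * sin d) <= 1).
  { destruct (MVT_gen (fun d => exp (-(k*d)) * (cos d + k * sin d)) 0 d
       (fun x => -(1+k^2) * exp (-(k*x)) * sin x)) as [c [Hc Hm]].
    - intros; apply KL_aux.
    - intros; apply (cont_of_der _ _ _ (KL_aux k)).
    - simpl in Hm. rewrite Rmult_0_r, Ropp_0, exp_0, cos_0, sin_0 in Hm.
      pose proof (exp_pos (-(k*c))).
      assert (0 <= k^2) by nra.
      destruct (Rle_dec 0 d).
      + rewrite Rmin_left in Hc by lra. rewrite Rmax_right in Hc by lra.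
        assert (0 <= sin c) by (apply sin_ge_0; lra).
        assert (-(1+k^2) * exp (-(k*c)) * sin c * (d - 0) <= 0).
        { replace (-(1+k^2) * exp (-(k*c)) * sin c * (d - 0)) with (-(((1+k^2) * exp (-(k*c)) * sin c) * d)) by ring.
          assert (0 <= (1+k^2) * exp (-(k*c)) * sin c) by (apply Rmult_le_pos; try apply Rmult_le_pos; lra). nra. }
        lra.
      + rewrite Rmin_right in Hc by lra. rewrite Rmax_left in Hc by lra.
        assert (sin c <= 0). { rewrite <- (Ropp_involutive c). rewrite sin_neg.
          assert (0 <= sin (-c)) by (apply sin_ge_0; lra). lra. }
        assert (-(1+k^2) * exp (-(k*c)) * sin c * (d - 0) <= 0).
        { replace (-(1+k^2) * exp (-(k*c)) * sin c * (d - 0)) with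
            (((1+k^2) * exp (-(k*c)) * (- sin c)) * d) by ring.
          assert (0 <= (1+k^2) * exp (-(k*c)) * (- sin c)) by (apply Rmult_le_pos; try apply Rmult_le_pos; lra). nra. }
        lra. }
  pose proof (exp_pos (k*d)).
  assert (E : exp (k*d) * exp (-(k*d)) = 1). { rewrite <- exp_plus. rewrite Rplus_opp_r. apply exp_0. }
  apply Rmult_le_compat_l with (r := exp (k*d)) in M. 2: lra.
  rewrite <- Rmult_assoc, E in M. lra.
Qed.


Definition Lf g s a (P : R*R) := exp (kk g * a) *
  (s * fh g * (1 + kk g ^ 2) * fst P * cos a + snd P * (kk g * cos a + sin a)).

Lemma F1 g s a P : -2 < g < 2 -> (s = 1 \/ s = -1) -> -(PI/2) <= a <= PI/2 ->
  Lf g s a P <= Kfin g P.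
Proof.
  intros Hg Hs Ha. pose proof (h_pos g Hg) as Hh.
  destruct (polar g P Hg) as [HP [Hu [Hv _]]].
  rewrite K_eq. unfold Lf.
  set (r := sqrt (fB g P)) in *. set (F := fPhi g P) in *. set (k := kk g) in *.
  destruct P as [x y]. unfold fA, fZ in *; unfold fq in *; cbn [fst snd] in *.
  assert (Hsx : s * x <= Rabs x).
  { destruct Hs; subst; [rewrite Rmult_1_l; apply Rle_abs|].
    replace (-1 * x) with (- x) by ring. rewrite <- Rabs_Ropp. apply Rle_abs. }
  assert (Hca : 0 <= cos a) by (apply cos_ge_0; lra).
  pose proof (exp_pos (k*a)) as Hea.
  assert (Hk2 : 0 <= k^2) by nra.
  assert (S1 : s * fh g * (1 + k ^ 2) * x * cos a <= fh g * (1 + k ^ 2) * Rabs x * cos a).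
  { replace (s * fh g * (1 + k ^ 2) * x * cos a) with ((fh g * (1 + k ^ 2) * cos a) * (s * x)) by ring.
    replace (fh g * (1 + k ^ 2) * Rabs x * cos a) with ((fh g * (1 + k ^ 2) * cos a) * Rabs x) by ring.
    apply Rmult_le_compat_l. apply Rmult_le_pos; [apply Rmult_le_pos|]; lra. auto. }
  assert (Hy : y = r * sin F - k * (r * cos F)).
  { rewrite <- Hu. assert (Hgk : g/2 = k * fh g) by (apply gk; auto).
    replace (k * (fh g * Rabs x)) with (g/2 * Rabs x) by (rewrite Hgk; ring). lra. }
  assert (S2 : fh g * (1 + k ^ 2) * Rabs x * cos a + y * (k * cos a + sin a)
               = r * (cos (F - a) + k * sin (F - a))).
  { rewrite cos_minus, sin_minus, Hy.
    replace (fh g * (1 + k ^ 2) * Rabs x * cos a) with ((1 + k^2) * (fh g * Rabs x) * cos a) by ring.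
    rewrite Hu. ring. }
  assert (S3 : r * (cos (F - a) + k * sin (F - a)) <= r * exp (k * (F - a))).
  { apply Rmult_le_compat_l. apply sqrt_pos. apply KL. lra. }
  assert (E : exp (k*a) * exp (k * (F - a)) = exp (k * F)).
  { rewrite <- exp_plus. f_equal. ring. }
  apply Rle_trans with (exp (k * a) * (r * exp (k * (F - a)))).
  - apply Rmult_le_compat_l. lra. lra.
  - rewrite <- E. lra.
Qed.

Lemma F2 g P : -2 < g < 2 -> exists s a, (s = 1 \/ s = -1) /\ -(PI/2) <= a <= PI/2 /\
  Lf g s a P = Kfin g P.
Proof.
  intros Hg. pose proof (h_pos g Hg) as Hh.
  destruct (polar g P Hg) as [HP [Hu [Hv _]]].
  exists (if Rle_dec 0 (fst P) then 1 else -1), (fPhi g P). split; [|split; auto].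
  { destruct (Rle_dec 0 (fst P)); auto. }
  rewrite K_eq. unfold Lf.
  set (r := sqrt (fB g P)) in *. set (F := fPhi g P) in *. set (k := kk g) in *.
  destruct P as [x y]. unfold fA, fZ in *; unfold fq in *; cbn [fst snd] in *.
  assert (Hsx : (if Rle_dec 0 x then 1 else -1) * x = Rabs x).
  { destruct (Rle_dec 0 x). rewrite Rabs_right; lra. rewrite Rabs_left; lra. }
  assert (Hy : y = r * sin F - k * (r * cos F)).
  { rewrite <- Hu. assert (Hgk : g/2 = k * fh g) by (apply gk; auto).
    replace (k * (fh g * Rabs x)) with (g/2 * Rabs x) by (rewrite Hgk; ring). lra. }
  replace ((if Rle_dec 0 x then 1 else -1) * fh g * (1 + k ^ 2) * x * cos F) with
    ((1 + k ^ 2) * (fh g * ((if Rle_dec 0 x then 1 else -1) * x)) * cos F) by ring.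
  rewrite (Rmult_comm r (exp (k*F))), Hsx, Hu, Hy. f_equal.
  pose proof (sin2_cos2 F). unfold Rsqr in *.
  transitivity (r * (sin F * sin F + cos F * cos F)). ring. rewrite H; ring.
Qed.


Lemma exp_le x y : x <= y -> exp x <= exp y.
Proof. intros [H|H]. left; apply exp_increasing; auto. subst; lra. Qed.

Lemma Lf_add g s a x1 y1 x2 y2 : Lf g s a (x1 + x2, y1 + y2) = Lf g s a (x1, y1) + Lf g s a (x2, y2).
Proof. unfold Lf; simpl. ring. Qed.

Lemma Lf_scal g s a l x y : Lf g s a (l * x, l * y) = l * Lf g s a (x, y).
Proof. unfold Lf; simpl. ring. Qed.

Lemma K_sub g x1 y1 x2 y2 : -2 < g < 2 ->
  Kfin g (x1 + x2, y1 + y2) <= Kfin g (x1, y1) + Kfin g (x2, y2).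
Proof.
  intros Hg. destruct (F2 g (x1 + x2, y1 + y2) Hg) as [s [a [Hs [Ha E]]]].
  rewrite <- E, Lf_add. pose proof (F1 g s a (x1,y1) Hg Hs Ha).
  pose proof (F1 g s a (x2,y2) Hg Hs Ha). lra.
Qed.

Lemma K_hom g l x y : -2 < g < 2 -> 0 <= l -> Kfin g (l * x, l * y) = l * Kfin g (x, y).
Proof.
  intros Hg Hl. apply Rle_antisym.
  - destruct (F2 g (l * x, l * y) Hg) as [s [a [Hs [Ha E]]]].
    rewrite <- E, Lf_scal. apply Rmult_le_compat_l; auto. apply F1; auto.
  - destruct (F2 g (x, y) Hg) as [s [a [Hs [Ha E]]]].
    rewrite <- E, <- Lf_scal. apply F1; auto.
Qed.

Lemma K_nonneg g P : 0 <= Kfin g P.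
Proof. rewrite K_eq. apply Rmult_le_pos. apply sqrt_pos. left; apply exp_pos. Qed.

Lemma sqrt_le_abs a b : sqrt (a ^ 2 + b ^ 2) <= Rabs a + Rabs b.
Proof.
  rewrite <- (sqrt_square (Rabs a + Rabs b)).
  2: pose proof (Rabs_pos a); pose proof (Rabs_pos b); lra.
  apply sqrt_le_1_alt.
  pose proof (Rabs_pos a); pose proof (Rabs_pos b).
  replace (a^2) with (Rabs a * Rabs a). replace (b^2) with (Rabs b * Rabs b). nra.
  rewrite <- Rabs_mult. rewrite Rabs_right. ring. nra.
  rewrite <- Rabs_mult. rewrite Rabs_right. ring. nra.
Qed.

Lemma abs_le_sqrt a b : Rabs a <= sqrt (a ^ 2 + b ^ 2) /\ Rabs b <= sqrt (a ^ 2 + b ^ 2).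
Proof.
  destruct (sqrt_plus_sqr a b) as [H _].
  pose proof (Rmax_l (Rabs a) (Rabs b)). pose proof (Rmax_r (Rabs a) (Rabs b)). lra.
Qed.

Definition Ek g := exp (Rabs (kk g) * (PI / 2)).

Lemma expkPhi_bounds g P : -2 < g < 2 ->
  exp (kk g * fPhi g P) <= Ek g /\ / Ek g <= exp (kk g * fPhi g P).
Proof.
  intros Hg. destruct (polar g P Hg) as [HP _]. pose proof PI_RGT_0.
  assert (Rabs (kk g * fPhi g P) <= Rabs (kk g) * (PI/2)).
  { rewrite Rabs_mult. apply Rmult_le_compat_l. apply Rabs_pos.
    apply Rabs_le. lra. }
  apply Rabs_le_between in H0.
  split. apply exp_le; lra.
  unfold Ek. rewrite <- exp_Ropp. apply exp_le. lra.
Qed.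

Definition CK g := 2 * Ek g * (1 + fh g * (1 + Rabs (kk g))).

Lemma K_upper g x y : -2 < g < 2 -> Kfin g (x, y) <= CK g * sqrt (x ^ 2 + y ^ 2).
Proof.
  intros Hg. pose proof (h_pos g Hg) as Hh.
  destruct (polar g (x,y) Hg) as [HP [Hu [Hv _]]].
  destruct (expkPhi_bounds g (x,y) Hg) as [E1 E2].
  rewrite K_eq. rewrite B_eq by auto.
  pose proof (sqrt_le_abs (fA g (x,y)) (fh g * fq (x,y))).
  unfold fA, fZ, fq in *; cbn [fst snd] in *.
  assert (Hgk : g/2 = kk g * fh g) by (apply gk; auto).
  assert (Rabs (y + / 2 * g * Rabs x) <= Rabs y + Rabs (kk g) * fh g * Rabs x).
  { replace (/2 * g * Rabs x) with (kk g * fh g * Rabs x) by (rewrite <- Hgk; field).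
    eapply Rle_trans. apply Rabs_triang. rewrite !Rabs_mult. rewrite (Rabs_right (fh g)) by lra.
    rewrite Rabs_Rabsolu. lra. }
  rewrite (Rabs_right (fh g * Rabs x)) in H by (pose proof (Rabs_pos x); nra).
  destruct (abs_le_sqrt x y) as [Ax Ay].
  set (S := sqrt (x ^ 2 + y ^ 2)) in *.
  pose proof (Rabs_pos x). pose proof (Rabs_pos (kk g)).
  assert (R1 : sqrt ((y + / 2 * g * Rabs x) ^ 2 + (fh g * Rabs x) ^ 2) <= (1 + fh g * (1 + Rabs (kk g))) * (2 * S)).
  { assert (fh g * Rabs x <= fh g * S) by (apply Rmult_le_compat_l; lra).
    assert (Rabs (kk g) * fh g * Rabs x <= Rabs (kk g) * fh g * S).
    { apply Rmult_le_compat_l; nra. }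
    assert (0 <= fh g * (1 + Rabs (kk g)) * S) by (apply Rmult_le_pos; [nra| apply sqrt_pos]).
    nra. }
  unfold CK.
  pose proof (sqrt_pos ((y + / 2 * g * Rabs x) ^ 2 + (fh g * Rabs x) ^ 2)).
  pose proof (exp_pos (kk g * fPhi g (x, y))).
  apply Rle_trans with (((1 + fh g * (1 + Rabs (kk g))) * (2 * S)) * Ek g).
  apply Rmult_le_compat; lra. lra.
Qed.


Lemma K_lower g x y : -2 < g < 2 ->
  sqrt (x ^ 2 + y ^ 2) <= Ek g * (/ fh g + 1 + Rabs (kk g)) * Kfin g (x, y).
Proof.
  intros Hg. pose proof (h_pos g Hg) as Hh.
  destruct (polar g (x,y) Hg) as [HP [Hu [Hv _]]].
  destruct (expkPhi_bounds g (x,y) Hg) as [E1 E2].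
  rewrite K_eq.
  unfold fA, fZ, fq in *; cbn [fst snd] in *.
  set (r := sqrt (fB g (x, y))) in *. set (F := fPhi g (x,y)) in *.
  assert (Hgk : g/2 = kk g * fh g) by (apply gk; auto).
  pose proof (sqrt_pos (fB g (x, y))) as Hr. fold r in Hr.
  pose proof (COS_bound F). pose proof (SIN_bound F).
  assert (Hx : fh g * Rabs x <= r) by (rewrite Hu; nra).
  assert (HA : Rabs (y + / 2 * g * Rabs x) <= r).
  { rewrite Hv. rewrite Rabs_mult, (Rabs_right r) by lra. apply Rabs_le_between' in H0 || idtac.
    assert (Rabs (sin F) <= 1) by (apply Rabs_le; lra). nra. }
  pose proof (Rabs_pos x). pose proof (Rabs_pos (kk g)).
  assert (Hx' : Rabs x <= r / fh g).
  { apply (Rmult_le_reg_l (fh g)). lra. replace (fh g * (r / fh g)) with r by (field; lra). lra. }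
  assert (Hy : Rabs y <= r + Rabs (kk g) * r).
  { replace y with ((y + / 2 * g * Rabs x) - kk g * (fh g * Rabs x)) by (rewrite <- (Rmult_assoc (kk g)), <- Hgk; field).
    eapply Rle_trans. apply Rabs_triang. rewrite Rabs_Ropp, Rabs_mult.
    rewrite (Rabs_right (fh g * Rabs x)) by nra.
    assert (Rabs (kk g) * (fh g * Rabs x) <= Rabs (kk g) * r) by (apply Rmult_le_compat_l; lra). lra. }
  pose proof (sqrt_le_abs x y).
  assert (r <= Ek g * (r * exp (kk g * F))).
  { assert (0 < Ek g) by (unfold Ek; apply exp_pos).
    assert (1 <= Ek g * exp (kk g * F)).
    { apply Rmult_le_compat_l with (r := Ek g) in E2. rewrite Rinv_r in E2; lra. lra. }
    nra. }
  assert (/ fh g * r = r / fh g) by (unfold Rdiv; ring).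
  assert (0 <= / fh g) by (left; apply Rinv_0_lt_compat; lra).
  assert (r * (/ fh g + 1 + Rabs (kk g)) <= Ek g * (r * exp (kk g * F)) * (/ fh g + 1 + Rabs (kk g))).
  { apply Rmult_le_compat_r; lra. }
  nra.
Qed.

Lemma D_convex g : -2 < g < 2 -> convex2 (fun P => Kfin g P <= 1).
Proof.
  intros Hg [x1 y1] [x2 y2] t H1 H2 Ht. cbn [fst snd].
  eapply Rle_trans. apply K_sub; auto.
  rewrite !K_hom by (auto; lra). nra.
Qed.

Lemma D_bounded g : -2 < g < 2 -> bounded2 (fun P => Kfin g P <= 1).
Proof.
  intros Hg. exists (Ek g * (/ fh g + 1 + Rabs (kk g))).
  intros [x y] H. unfold dist2. cbn [fst snd].
  replace (x - 0) with x by ring. replace (y - 0) with y by ring.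
  eapply Rle_trans. apply (K_lower g); auto.
  pose proof (h_pos g Hg). pose proof (Rabs_pos (kk g)).
  assert (0 <= Ek g * (/ fh g + 1 + Rabs (kk g))).
  { apply Rmult_le_pos. unfold Ek; left; apply exp_pos.
    assert (0 < / fh g) by (apply Rinv_0_lt_compat; lra). lra. }
  apply Rle_trans with (Ek g * (/ fh g + 1 + Rabs (kk g)) * 1). apply Rmult_le_compat_l; auto. lra.
Qed.

Lemma K_lip g x1 y1 x2 y2 : -2 < g < 2 ->
  Kfin g (x1, y1) <= Kfin g (x2, y2) + CK g * dist2 (x1, y1) (x2, y2).
Proof.
  intros Hg. replace (x1, y1) with (x2 + (x1 - x2), y2 + (y1 - y2)) at 1 by (f_equal; ring).
  eapply Rle_trans. apply K_sub; auto.
  pose proof (K_upper g (x1 - x2) (y1 - y2) Hg). unfold dist2. cbn [fst snd]. lra.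
Qed.

Lemma dist2_sym P Q : dist2 P Q = dist2 Q P.
Proof. unfold dist2. f_equal. ring. Qed.

Lemma CK_pos g : -2 < g < 2 -> 0 < CK g.
Proof. intros Hg. pose proof (h_pos g Hg). pose proof (Rabs_pos (kk g)).
  unfold CK, Ek. pose proof (exp_pos (Rabs (kk g) * (PI / 2))).
  assert (0 < 1 + fh g * (1 + Rabs (kk g))) by nra. nra. Qed.

Lemma D_boundary g P : -2 < g < 2 ->
  (indicatrix g P <-> boundary2 (fun P => Kfin g P <= 1) P).
Proof.
  intros Hg. pose proof (CK_pos g Hg). unfold indicatrix. split.
  - intros HK eps Heps. destruct P as [x y]. split.
    + exists (x, y). split. lra. unfold dist2; cbn [fst snd].
      replace ((x - x) ^ 2 + (y - y) ^ 2) with 0 by ring. rewrite sqrt_0. auto.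
    + set (S := sqrt (x ^ 2 + y ^ 2)).
      assert (0 <= S) by apply sqrt_pos.
      set (d := eps / (S + 1)).
      assert (Hd : 0 < d) by (unfold d; apply Rdiv_lt_0_compat; lra).
      exists ((1 + d) * x, (1 + d) * y). split.
      * rewrite K_hom by (auto; lra). rewrite HK. lra.
      * unfold dist2; cbn [fst snd].
        replace ((x - (1 + d) * x) ^ 2 + (y - (1 + d) * y) ^ 2) with ((d * d) * (x ^ 2 + y ^ 2)) by ring.
        rewrite sqrt_mult by nra. rewrite sqrt_square by lra. fold S.
        unfold d. apply (Rmult_lt_reg_r (S + 1)). lra.
        replace (eps / (S + 1) * S * (S + 1)) with (eps * S) by (field; lra). nra.
  - intros HB. destruct (Rtotal_order (Kfin g P) 1) as [Hlt|[Heq|Hgt]]; auto.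
    + exfalso. set (eps := (1 - Kfin g P) / CK g).
      assert (0 < eps) by (unfold eps; apply Rdiv_lt_0_compat; lra).
      destruct (HB eps H0) as [_ [Q [HQ Hd]]].
      destruct P as [x1 y1]; destruct Q as [x2 y2].
      pose proof (K_lip g x2 y2 x1 y1 Hg). rewrite dist2_sym in Hd.
      assert (CK g * dist2 (x2, y2) (x1, y1) < CK g * eps) by (apply Rmult_lt_compat_l; lra).
      unfold eps in H2. replace (CK g * ((1 - Kfin g (x1, y1)) / CK g)) with (1 - Kfin g (x1, y1)) in H2 by (field; lra).
      lra.
    + exfalso. set (eps := (Kfin g P - 1) / CK g).
      assert (0 < eps) by (unfold eps; apply Rdiv_lt_0_compat; lra).
      destruct (HB eps H0) as [[Q [HQ Hd]] _].
      destruct P as [x1 y1]; destruct Q as [x2 y2].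
      pose proof (K_lip g x1 y1 x2 y2 Hg).
      assert (CK g * dist2 (x1, y1) (x2, y2) < CK g * eps) by (apply Rmult_lt_compat_l; lra).
      unfold eps in H2. replace (CK g * ((Kfin g (x1, y1) - 1) / CK g)) with (Kfin g (x1, y1) - 1) in H2 by (field; lra).
      lra.
Qed.


Section Tau.
Variables (k h N : R).

Definition cc := k / (2 * N ^ 2).
Definition pp t := t + cc * (1 - cos (2 * N * t)).
Definition pp1 t := 1 + cc * (2 * N) * sin (2 * N * t).
Definition pp2 t := cc * (2 * N) * (2 * N) * cos (2 * N * t).
Definition XX t := exp (- k * pp t) * cos (pp t) / h.
Definition XX1 t := exp (- k * pp t) * (- k * cos (pp t) - sin (pp t)) * pp1 t / h.
Definition XX2 t := exp (- k * pp t) * (((k^2 - 1) * cos (pp t) + 2 * k * sin (pp t)) * pp1 t ^ 2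
   + (- k * cos (pp t) - sin (pp t)) * pp2 t) / h.
Definition YY t := exp (- k * pp t) * (sin (pp t) - k * cos (pp t)).
Definition YY1 t := exp (- k * pp t) * (1 + k^2) * cos (pp t) * pp1 t.
Definition YY2 t := exp (- k * pp t) * (1 + k^2) * (- (k * cos (pp t) + sin (pp t)) * pp1 t ^ 2
   + cos (pp t) * pp2 t).

Hypothesis Hh : 0 < h.
Hypothesis HN : 0 < N.

Lemma pp_d t : is_derive pp t (pp1 t).
Proof. unfold pp, pp1. auto_derive; auto. ring. Qed.
Lemma pp1_d t : is_derive pp1 t (pp2 t).
Proof. unfold pp1, pp2. auto_derive; auto. ring. Qed.

Lemma Dpp t : Derive (fun x => pp x) t = pp1 t.
Proof. apply is_derive_unique. apply pp_d. Qed.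
Lemma Epp t : ex_derive (fun x => pp x) t.
Proof. eexists. apply pp_d. Qed.
Lemma Dpp1 t : Derive (fun x => pp1 x) t = pp2 t.
Proof. apply is_derive_unique. apply pp1_d. Qed.
Lemma Epp1 t : ex_derive (fun x => pp1 x) t.
Proof. eexists. apply pp1_d. Qed.

Ltac fin_der := repeat split; try apply Epp; try apply Epp1; try rewrite ?Dpp, ?Dpp1.

Lemma XX_d t : is_derive XX t (XX1 t).
Proof. unfold XX, XX1. auto_derive; fin_der. field. lra. Qed.
Lemma XX1_d t : is_derive XX1 t (XX2 t).
Proof. unfold XX1, XX2. auto_derive; fin_der. field. lra. Qed.
Lemma YY_d t : is_derive YY t (YY1 t).
Proof. unfold YY, YY1. auto_derive; fin_der. ring. Qed.
Lemma YY1_d t : is_derive YY1 t (YY2 t).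
Proof. unfold YY1, YY2. auto_derive; fin_der. ring. Qed.
Lemma XX2_c t : continuous XX2 t.
Proof. apply (@ex_derive_continuous R_AbsRing R_NormedModule). unfold XX2, pp2. auto_derive; fin_der. Qed.
Lemma YY2_c t : continuous YY2 t.
Proof. apply (@ex_derive_continuous R_AbsRing R_NormedModule). unfold YY2, pp2. auto_derive; fin_der. Qed.

End Tau.


Section Junct.
Variables (k h N : R) (m : nat).
Hypothesis Hh : 0 < h.
Hypothesis HNm : N = 2 * INR m.
Hypothesis Hk : Rabs k < N.

Lemma N_pos : 0 < N.
Proof. pose proof (Rabs_pos k). lra. Qed.

Lemma cos_top : cos (2 * N * (PI / 2)) = 1 /\ sin (2 * N * (PI / 2)) = 0.
Proof.
  replace (2 * N * (PI / 2)) with (0 + 2 * INR m * PI) by (rewrite HNm; field).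
  rewrite cos_period, sin_period, cos_0, sin_0. auto.
Qed.

Lemma cos_bot : cos (2 * N * (-(PI / 2))) = 1 /\ sin (2 * N * (-(PI / 2))) = 0.
Proof.
  replace (2 * N * (-(PI / 2))) with (- (2 * N * (PI / 2))) by ring.
  rewrite cos_neg, sin_neg. destruct cos_top as [A B]. rewrite A, B. split; ring.
Qed.

Lemma pp_top : pp k N (PI/2) = PI/2 /\ pp1 k N (PI/2) = 1 /\ pp2 k N (PI/2) = 2 * k.
Proof. pose proof N_pos. destruct cos_top as [A B]. unfold pp, pp1, pp2, cc. rewrite A, B.
  repeat split; field; lra. Qed.

Lemma pp_bot : pp k N (-(PI/2)) = -(PI/2) /\ pp1 k N (-(PI/2)) = 1 /\ pp2 k N (-(PI/2)) = 2 * k.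
Proof. pose proof N_pos. destruct cos_bot as [A B]. unfold pp, pp1, pp2, cc. rewrite A, B.
  repeat split; field; lra. Qed.

Lemma XX_ends : XX k h N (PI/2) = 0 /\ XX k h N (-(PI/2)) = 0.
Proof. unfold XX. destruct pp_top as [A _]. destruct pp_bot as [B _]. rewrite A, B.
  rewrite cos_neg, cos_PI2. split; field; lra. Qed.

Lemma YY1_ends : YY1 k N (PI/2) = 0 /\ YY1 k N (-(PI/2)) = 0.
Proof. unfold YY1. destruct pp_top as [A _]. destruct pp_bot as [B _]. rewrite A, B.
  rewrite cos_neg, cos_PI2. split; ring. Qed.

Lemma XX2_ends : XX2 k h N (PI/2) = 0 /\ XX2 k h N (-(PI/2)) = 0.
Proof. unfold XX2. destruct pp_top as [A [A1 A2]]. destruct pp_bot as [B [B1 B2]].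
  rewrite A, A1, A2, B, B1, B2.
  rewrite cos_neg, sin_neg, cos_PI2, sin_PI2. split; field; lra. Qed.

Lemma pp1_pos t : 0 < pp1 k N t.
Proof.
  pose proof N_pos. unfold pp1, cc.
  replace (k / (2 * N ^ 2) * (2 * N)) with (k / N) by (field; lra).
  pose proof (SIN_bound (2 * N * t)).
  assert (Rabs (k / N * sin (2 * N * t)) < 1).
  { rewrite Rabs_mult. unfold Rdiv. rewrite Rabs_mult, (Rabs_right (/N)).
    2: left; apply Rinv_0_lt_compat; lra.
    assert (Rabs (sin (2 * N * t)) <= 1) by (apply Rabs_le; lra).
    assert (Rabs k * / N < 1).
    { apply (Rmult_lt_reg_r N). lra. rewrite Rmult_assoc, Rinv_l; lra. }
    pose proof (Rabs_pos k). pose proof (Rabs_pos (sin (2 * N * t))).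
    assert (0 <= Rabs k * / N). { apply Rmult_le_pos; auto. left; apply Rinv_0_lt_compat; lra. }
    nra. }
  apply Rabs_def2 in H1. lra.
Qed.

Lemma pp_incr a b : a < b -> pp k N a < pp k N b.
Proof.
  intros Hab.
  destruct (MVT_gen (pp k N) a b (pp1 k N)) as [c [_ Hc]].
  - intros; apply pp_d.
  - intros; apply (cont_of_der _ _ _ (pp_d k N)).
  - pose proof (pp1_pos c). assert (0 < pp1 k N c * (b - a)) by (apply Rmult_lt_0_compat; lra). lra.
Qed.

Lemma pp_inj a b : pp k N a = pp k N b -> a = b.
Proof. intros H. destruct (Rtotal_order a b) as [H1|[H1|H1]]; auto;
  apply pp_incr in H1; lra. Qed.

Lemma pp_range t : -(PI/2) <= t <= PI/2 -> -(PI/2) <= pp k N t <= PI/2.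
Proof.
  intros Ht. destruct pp_top as [A _]. destruct pp_bot as [B _].
  split.
  - destruct (Req_dec t (-(PI/2))). subst. lra. rewrite <- B. left; apply pp_incr; lra.
  - destruct (Req_dec t (PI/2)). subst. lra. rewrite <- A. left; apply pp_incr; lra.
Qed.

Lemma pp_range_open t : -(PI/2) < t < PI/2 -> -(PI/2) < pp k N t < PI/2.
Proof.
  intros Ht. destruct pp_top as [A _]. destruct pp_bot as [B _].
  split. rewrite <- B; apply pp_incr; lra. rewrite <- A; apply pp_incr; lra.
Qed.

Lemma pp_cont : continuity (pp k N).
Proof. intros t. apply (cont_of_der _ _ _ (pp_d k N)). Qed.

Lemma curv_num t : XX1 k h N t * YY2 k N t - YY1 k N t * XX2 k h N t =
   pp1 k N t ^ 3 * exp (- k * pp k N t) ^ 2 * (1 + k ^ 2) / h.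
Proof.
  unfold XX1, YY2, YY1, XX2. pose proof (sin2_cos2 (pp k N t)). unfold Rsqr in H.
  set (s := sin (pp k N t)) in *. set (c := cos (pp k N t)) in *.
  set (P := pp1 k N t). set (Q := pp2 k N t). set (E := exp (- k * pp k N t)).
  transitivity (P ^ 3 * E ^ 2 * (1 + k ^ 2) * (s * s + c * c) / h). field. lra.
  rewrite H. field. lra.
Qed.

Lemma curv_pos t : 0 < XX1 k h N t * YY2 k N t - YY1 k N t * XX2 k h N t.
Proof.
  rewrite curv_num. pose proof (pp1_pos t). pose proof (exp_pos (- k * pp k N t)).
  apply Rdiv_lt_0_compat; auto. apply Rmult_lt_0_compat. apply Rmult_lt_0_compat.
  apply pow_lt; auto. apply pow_lt; auto. nra.
Qed.

End Junct.


Definition al t := acos (cos t) - PI / 2.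
Definition sg t := if Rle_dec 0 (sin t) then 1 else -1.

Lemma al_range t : -(PI/2) <= al t <= PI/2.
Proof. unfold al. pose proof (acos_bound (cos t)). lra. Qed.

Lemma acos_facts t : cos (acos (cos t)) = cos t /\ sin (acos (cos t)) = Rabs (sin t).
Proof.
  pose proof (COS_bound t). split. apply cos_acos; lra.
  rewrite sin_acos by lra. rewrite Rtrigo_facts.sin_cos_Rabs. auto.
Qed.

Lemma sin0_al t : sin t = 0 -> al t = PI/2 \/ al t = -(PI/2).
Proof.
  intros H. destruct (acos_facts t) as [A B]. rewrite H, Rabs_R0 in B.
  pose proof (acos_bound (cos t)). unfold al.
  destruct (Req_dec (acos (cos t)) 0) as [E|E]. right; rewrite E; lra.
  destruct (Req_dec (acos (cos t)) PI) as [E'|E']. left; rewrite E'; lra.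
  exfalso. assert (0 < sin (acos (cos t))) by (apply sin_gt_0; lra). lra.
Qed.

Lemma LB t0 : exists d, 0 < d /\ forall t, Rabs (t - t0) < d ->
  (0 <= sin t /\ al t = al t0 + (t - t0) /\ 0 <= sin t0) \/
  (sin t <= 0 /\ al t = al t0 - (t - t0) /\ sin t0 <= 0).
Proof.
  set (a := acos (cos t0)). destruct (acos_facts t0) as [Ca Sa]. fold a in Ca, Sa.
  pose proof (acos_bound (cos t0)) as Ba. fold a in Ba. pose proof PI_RGT_0.
  assert (Br1 : forall d, 0 <= sin t0 -> 0 <= a + d <= PI ->
    0 <= sin (t0 + d) /\ al (t0 + d) = al t0 + d).
  { intros d Hs Hd. rewrite Rabs_right in Sa by lra.
    assert (cos (t0 + d) = cos (a + d) /\ sin (t0 + d) = sin (a + d)).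
    { rewrite !cos_plus, !sin_plus, Ca, Sa. auto. }
    destruct H0 as [H1 H2]. split. rewrite H2. apply sin_ge_0; lra.
    unfold al. rewrite H1, acos_cos by lra. fold a. ring. }
  assert (Br2 : forall d, sin t0 <= 0 -> 0 <= a - d <= PI ->
    sin (t0 + d) <= 0 /\ al (t0 + d) = al t0 - d).
  { intros d Hs Hd. rewrite Rabs_left1 in Sa by lra.
    assert (cos (t0 + d) = cos (a - d) /\ sin (t0 + d) = - sin (a - d)).
    { rewrite !cos_plus, sin_plus, cos_minus, sin_minus, Ca.
      replace (sin t0) with (- sin a) by lra. split; ring. }
    destruct H0 as [H1 H2]. split. rewrite H2. assert (0 <= sin (a - d)) by (apply sin_ge_0; lra). lra.
    unfold al. rewrite H1, acos_cos by lra. fold a. ring. }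
  destruct (Rtotal_order (sin t0) 0) as [Hn|[Hz|Hp]].
  - assert (0 < a < PI).
    { destruct (Req_dec a 0). rewrite H0, sin_0, Rabs_left in Sa; lra.
      destruct (Req_dec a PI). rewrite H1, sin_PI, Rabs_left in Sa; lra. lra. }
    exists (Rmin a (PI - a)). split. apply Rmin_glb_lt; lra.
    intros t Ht. right. pose proof (Rmin_l a (PI - a)). pose proof (Rmin_r a (PI - a)).
    apply Rabs_def2 in Ht.
    destruct (Br2 (t - t0)) as [X Y]; try lra.
    replace (t0 + (t - t0)) with t in X, Y by ring. repeat split; auto; lra.
  - exists PI. split. auto. intros t Ht. apply Rabs_def2 in Ht.
    rewrite Hz, Rabs_R0 in Sa.
    assert (a = 0 \/ a = PI).
    { destruct (Req_dec a 0). auto. destruct (Req_dec a PI). auto.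
      assert (0 < sin a) by (apply sin_gt_0; lra). lra. }
    destruct H0 as [E|E]; destruct (Rle_dec 0 (t - t0)).
    + left. destruct (Br1 (t - t0)) as [X Y]; try lra. replace (t0 + (t - t0)) with t in X, Y by ring. lra.
    + right. destruct (Br2 (t - t0)) as [X Y]; try lra. replace (t0 + (t - t0)) with t in X, Y by ring. lra.
    + right. destruct (Br2 (t - t0)) as [X Y]; try lra. replace (t0 + (t - t0)) with t in X, Y by ring. lra.
    + left. destruct (Br1 (t - t0)) as [X Y]; try lra. replace (t0 + (t - t0)) with t in X, Y by ring. lra.
  - assert (0 < a < PI).
    { destruct (Req_dec a 0). rewrite H0, sin_0, Rabs_right in Sa; lra.
      destruct (Req_dec a PI). rewrite H1, sin_PI, Rabs_right in Sa; lra. lra. }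
    exists (Rmin a (PI - a)). split. apply Rmin_glb_lt; lra.
    intros t Ht. left. pose proof (Rmin_l a (PI - a)). pose proof (Rmin_r a (PI - a)).
    apply Rabs_def2 in Ht.
    destruct (Br1 (t - t0)) as [X Y]; try lra.
    replace (t0 + (t - t0)) with t in X, Y by ring. repeat split; auto; lra.
Qed.


Lemma ball_R (x e y : R) : ball x e y <-> Rabs (y - x) < e.
Proof. unfold ball; simpl. unfold AbsRing_ball, abs, minus, plus, opp; simpl. tauto. Qed.

Lemma glue_D (f f1 f2 : R -> R) t0 d δ (Q1 Q2 : Prop) : 0 < δ ->
  (forall t, Rabs (t - t0) < δ -> (f t = f1 t /\ Q1) \/ (f t = f2 t /\ Q2)) ->
  (Q1 -> is_derive f1 t0 d /\ f1 t0 = f t0) ->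
  (Q2 -> is_derive f2 t0 d /\ f2 t0 = f t0) ->
  is_derive f t0 d.
Proof.
  intros Hd Hbr H1 H2. apply is_derive_Reals. intros eps He.
  assert (A1 : exists d1 : posreal, forall h, h <> 0 -> Rabs h < d1 -> Q1 ->
     Rabs ((f1 (t0 + h) - f1 t0) / h - d) < eps).
  { destruct (classic Q1) as [q|q].
    - destruct (H1 q) as [D _]. apply is_derive_Reals in D. destruct (D eps He) as [d1 P].
      exists d1; auto.
    - exists (mkposreal 1 Rlt_0_1). intros; contradiction. }
  assert (A2 : exists d1 : posreal, forall h, h <> 0 -> Rabs h < d1 -> Q2 ->
     Rabs ((f2 (t0 + h) - f2 t0) / h - d) < eps).
  { destruct (classic Q2) as [q|q].
    - destruct (H2 q) as [D _]. apply is_derive_Reals in D. destruct (D eps He) as [d1 P].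
      exists d1; auto.
    - exists (mkposreal 1 Rlt_0_1). intros; contradiction. }
  destruct A1 as [d1 P1]. destruct A2 as [d2 P2].
  assert (Hm : 0 < Rmin δ (Rmin d1 d2)).
  { apply Rmin_glb_lt; auto. apply Rmin_glb_lt; apply cond_pos. }
  exists (mkposreal _ Hm). intros hh Hh Hlt. simpl in Hlt.
  pose proof (Rmin_l δ (Rmin d1 d2)). pose proof (Rmin_r δ (Rmin d1 d2)).
  pose proof (Rmin_l d1 d2). pose proof (Rmin_r d1 d2).
  destruct (Hbr (t0 + hh)) as [[E q]|[E q]].
  { replace (t0 + hh - t0) with hh by ring. lra. }
  - destruct (H1 q) as [_ V]. rewrite E, <- V. apply P1; auto. lra.
  - destruct (H2 q) as [_ V]. rewrite E, <- V. apply P2; auto. lra.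
Qed.

Lemma cont_to_loc (f : R -> R) x : continuous f x -> forall eps : posreal,
  exists d : posreal, forall y, Rabs (y - x) < d -> Rabs (f y - f x) < eps.
Proof.
  intros H eps. apply continuity_pt_filterlim in H.
  destruct (proj1 (continuity_pt_locally f x) H eps) as [d P]. exists d. intros y Hy. apply P. apply ball_R. auto.
Qed.

Lemma glue_C (f f1 f2 : R -> R) t0 δ (Q1 Q2 : Prop) : 0 < δ ->
  (forall t, Rabs (t - t0) < δ -> (f t = f1 t /\ Q1) \/ (f t = f2 t /\ Q2)) ->
  (Q1 -> continuous f1 t0 /\ f1 t0 = f t0) ->
  (Q2 -> continuous f2 t0 /\ f2 t0 = f t0) ->
  continuous f t0.
Proof.
  intros Hd Hbr H1 H2. apply continuity_pt_filterlim. apply continuity_pt_locally.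
  intros eps.
  assert (A1 : exists d1 : posreal, forall y, Rabs (y - t0) < d1 -> Q1 ->
     Rabs (f1 y - f1 t0) < eps).
  { destruct (classic Q1) as [q|q].
    - destruct (H1 q) as [D _]. destruct (cont_to_loc _ _ D eps) as [d1 P].
      exists d1; auto.
    - exists (mkposreal 1 Rlt_0_1). intros; contradiction. }
  assert (A2 : exists d1 : posreal, forall y, Rabs (y - t0) < d1 -> Q2 ->
     Rabs (f2 y - f2 t0) < eps).
  { destruct (classic Q2) as [q|q].
    - destruct (H2 q) as [D _]. destruct (cont_to_loc _ _ D eps) as [d1 P].
      exists d1; auto.
    - exists (mkposreal 1 Rlt_0_1). intros; contradiction. }
  destruct A1 as [d1 P1]. destruct A2 as [d2 P2].
  assert (Hm : 0 < Rmin δ (Rmin d1 d2)).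
  { apply Rmin_glb_lt; auto. apply Rmin_glb_lt; apply cond_pos. }
  exists (mkposreal _ Hm). intros y Hy. apply ball_R in Hy.
  assert (Hy2 : Rabs (y - t0) < Rmin δ (Rmin d1 d2)) by exact Hy. clear Hy.
  pose proof (Rmin_l δ (Rmin d1 d2)). pose proof (Rmin_r δ (Rmin d1 d2)).
  pose proof (Rmin_l d1 d2). pose proof (Rmin_r d1 d2).
  destruct (Hbr y) as [[E q]|[E q]]. lra.
  - destruct (H1 q) as [_ V]. rewrite E, <- V. apply P1; auto. lra.
  - destruct (H2 q) as [_ V]. rewrite E, <- V. apply P2; auto. lra.
Qed.


Lemma comp_aff (F F1 : R -> R) (a s t0 : R) : (forall x, is_derive F x (F1 x)) ->
  is_derive (fun t => F (a + s * (t - t0))) t0 (s * F1 a).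
Proof.
  intros HF.
  assert (Hg : is_derive (fun t : R => a + s * (t - t0)) t0 s) by (auto_derive; auto; ring).
  pose proof (@is_derive_comp R_AbsRing R_NormedModule F (fun t => a + s * (t - t0)) t0 (F1 (a + s * (t0 - t0))) s (HF _) Hg).
  replace (a + s * (t0 - t0)) with a in H by ring. exact H.
Qed.

Lemma comp_aff_c (F : R -> R) (a s t0 : R) : (forall x, ex_derive F x) ->
  continuous (fun t => F (a + s * (t - t0))) t0.
Proof.
  intros HF. apply (@ex_derive_continuous R_AbsRing R_NormedModule).
  eexists. apply (comp_aff F (Derive F)). intros x. apply Derive_correct. apply HF.
Qed.

Lemma sin0_F (F : R -> R) t : F (PI/2) = 0 -> F (-(PI/2)) = 0 -> sin t = 0 -> F (al t) = 0.
Proof. intros A B S. destruct (sin0_al t S) as [E|E]; rewrite E; auto. Qed.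

Lemma odd_D (F F1 : R -> R) (t0 : R) : (forall x, is_derive F x (F1 x)) -> F (PI/2) = 0 -> F (-(PI/2)) = 0 ->
  is_derive (fun t => sg t * F (al t)) t0 (F1 (al t0)).
Proof.
  intros HF A B. destruct (LB t0) as [d [Hd HB]].
  apply (glue_D _ (fun t => F (al t0 + 1 * (t - t0))) (fun t => -1 * F (al t0 + (-1) * (t - t0)))
     t0 _ d (0 <= sin t0) (sin t0 <= 0) Hd).
  - intros t Ht. destruct (HB t Ht) as [[S [E S0]]|[S [E S0]]].
    + left. split; auto. unfold sg. destruct (Rle_dec 0 (sin t)); [|lra].
      rewrite E. replace (al t0 + 1 * (t - t0)) with (al t0 + (t - t0)) by ring. ring.
    + right. split; auto.
      replace (al t0 + -1 * (t - t0)) with (al t) by (rewrite E; ring).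
      unfold sg. destruct (Rle_dec 0 (sin t)).
      * rewrite (sin0_F F t A B) by lra. ring.
      * ring.
  - intros q. split.
    + replace (F1 (al t0)) with (1 * F1 (al t0)) by ring. apply comp_aff; auto.
    + unfold sg. destruct (Rle_dec 0 (sin t0)); [|lra].
      replace (al t0 + 1 * (t0 - t0)) with (al t0) by ring. ring.
  - intros q. split.
    + replace (F1 (al t0)) with (-1 * (-1 * F1 (al t0))) by ring.
      apply is_derive_scal. apply comp_aff; auto.
    + replace (al t0 + -1 * (t0 - t0)) with (al t0) by ring.
      unfold sg. destruct (Rle_dec 0 (sin t0)).
      * rewrite (sin0_F F t0 A B) by lra. ring.
      * ring.
Qed.

Lemma even_D (F F1 : R -> R) (t0 : R) : (forall x, is_derive F x (F1 x)) -> F1 (PI/2) = 0 -> F1 (-(PI/2)) = 0 ->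
  is_derive (fun t => F (al t)) t0 (sg t0 * F1 (al t0)).
Proof.
  intros HF A B. destruct (LB t0) as [d [Hd HB]].
  apply (glue_D _ (fun t => F (al t0 + 1 * (t - t0))) (fun t => F (al t0 + (-1) * (t - t0)))
     t0 _ d (0 <= sin t0) (sin t0 <= 0) Hd).
  - intros t Ht. destruct (HB t Ht) as [[S [E S0]]|[S [E S0]]].
    + left. split; auto. rewrite E. f_equal. ring.
    + right. split; auto. rewrite E. f_equal. ring.
  - intros q. split.
    + unfold sg. destruct (Rle_dec 0 (sin t0)); [|lra]. apply comp_aff; auto.
    + f_equal. ring.
  - intros q. split.
    + unfold sg. destruct (Rle_dec 0 (sin t0)).
      * rewrite (sin0_F F1 t0 A B) by lra.
        replace (1 * 0) with (-1 * F1 (al t0)) by (rewrite (sin0_F F1 t0 A B) by lra; ring).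
        apply comp_aff; auto.
      * apply comp_aff; auto.
    + f_equal. ring.
Qed.

Lemma odd_C (F : R -> R) (t0 : R) : (forall x, ex_derive F x) -> F (PI/2) = 0 -> F (-(PI/2)) = 0 ->
  continuous (fun t => sg t * F (al t)) t0.
Proof.
  intros HF A B. apply (@ex_derive_continuous R_AbsRing R_NormedModule).
  eexists. apply (odd_D F (Derive F)); auto. intros x; apply Derive_correct; auto.
Qed.

Lemma even_C (F : R -> R) (t0 : R) : (forall x, ex_derive F x) -> continuous (fun t => F (al t)) t0.
Proof.
  intros HF. destruct (LB t0) as [d [Hd HB]].
  apply (glue_C _ (fun t => F (al t0 + 1 * (t - t0))) (fun t => F (al t0 + (-1) * (t - t0)))
     t0 d (0 <= sin t0) (sin t0 <= 0) Hd).
  - intros t Ht. destruct (HB t Ht) as [[S [E S0]]|[S [E S0]]].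
    + left. split; auto. rewrite E. f_equal. ring.
    + right. split; auto. rewrite E. f_equal. ring.
  - intros q. split. apply comp_aff_c; auto. f_equal. ring.
  - intros q. split. apply comp_aff_c; auto. f_equal. ring.
Qed.


Lemma polar_unique g P rho th : -2 < g < 2 -> 0 < rho -> -(PI/2) <= th <= PI/2 ->
  fh g * fq P = rho * cos th -> fA g P = rho * sin th ->
  sqrt (fB g P) = rho /\ fPhi g P = th.
Proof.
  intros Hg Hr Ht H1 H2.
  assert (Er : sqrt (fB g P) = rho).
  { rewrite B_eq, H1, H2 by auto.
    replace ((rho * sin th) ^ 2 + (rho * cos th) ^ 2) with (rho * rho * (Rsqr (sin th) + Rsqr (cos th))) by (unfold Rsqr; ring).
    rewrite sin2_cos2, Rmult_1_r. apply sqrt_square. lra. }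
  split; auto.
  destruct (polar g P Hg) as [HP [Hu [Hv _]]]. rewrite Er in Hu, Hv.
  assert (sin (fPhi g P) = sin th).
  { apply (Rmult_eq_reg_l rho). lra. lra. }
  rewrite <- (asin_sin (fPhi g P)), <- (asin_sin th), H; auto.
Qed.

Lemma cos1_0 x : 0 <= x < 2 * PI -> cos x = 1 -> x = 0.
Proof.
  intros Hx Hc. pose proof PI_RGT_0.
  replace x with (2 * (x / 2)) in Hc by field. rewrite cos_2a_sin in Hc.
  assert (sin (x / 2) = 0) by nra.
  destruct (Req_dec x 0); auto. exfalso.
  assert (0 < sin (x / 2)) by (apply sin_gt_0; lra). lra.
Qed.

Lemma sincos_inj s t : 0 <= s < 2 * PI -> 0 <= t < 2 * PI -> sin s = sin t -> cos s = cos t -> s = t.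
Proof.
  intros Hs Ht S C.
  assert (cos (s - t) = 1).
  { rewrite cos_minus, S, C. pose proof (sin2_cos2 t). unfold Rsqr in H. lra. }
  destruct (Rle_dec t s).
  - apply cos1_0 in H; lra.
  - rewrite <- cos_neg in H. replace (- (s - t)) with (t - s) in H by ring.
    apply cos1_0 in H; lra.
Qed.

Lemma al_per t : al (t + 2 * PI) = al t.
Proof. unfold al. replace (t + 2 * PI) with (t + 2 * INR 1 * PI) by (simpl; ring).
  rewrite cos_period. auto. Qed.
Lemma sg_per t : sg (t + 2 * PI) = sg t.
Proof. unfold sg. replace (t + 2 * PI) with (t + 2 * INR 1 * PI) by (simpl; ring).
  rewrite sin_period. auto. Qed.

Lemma sg_sq t : sg t * sg t = 1.
Proof. unfold sg. destruct Rle_dec; ring. Qed.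


Section Curve.
Variables (g N : R) (m : nat).
Hypothesis Hg : -2 < g < 2.
Hypothesis HNm : N = 2 * INR m.
Hypothesis Hk : Rabs (kk g) < N.

Definition cx t := sg t * XX (kk g) (fh g) N (al t).
Definition cy t := YY (kk g) N (al t).
Definition cx1 t := XX1 (kk g) (fh g) N (al t).
Definition cy1 t := sg t * YY1 (kk g) N (al t).
Definition cx2 t := sg t * XX2 (kk g) (fh g) N (al t).
Definition cy2 t := YY2 (kk g) N (al t).

Lemma Rabs_sg t v : Rabs (sg t * v) = Rabs v.
Proof. rewrite Rabs_mult. unfold sg. destruct Rle_dec.
  rewrite Rabs_R1; ring. rewrite Rabs_m1; ring. Qed.

Lemma curve_polar t : Kfin g (cx t, cy t) = 1 /\ fPhi g (cx t, cy t) = pp (kk g) N (al t).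
Proof.
  pose proof (h_pos g Hg) as Hh.
  set (tau := al t). set (F := pp (kk g) N tau). set (E := exp (- kk g * F)).
  assert (HF : -(PI/2) <= F <= PI/2) by (apply (pp_range _ _ m); auto; apply al_range).
  assert (HE : 0 < E) by apply exp_pos.
  assert (Hc : 0 <= cos F) by (apply cos_ge_0; lra).
  assert (Hq : fq (cx t, cy t) = E * cos F / fh g).
  { unfold fq, cx; cbn [fst]. rewrite Rabs_sg. unfold XX. fold tau. fold F. fold E.
    apply Rabs_right. apply Rle_ge. apply Rmult_le_pos. nra. left; apply Rinv_0_lt_compat; lra. }
  destruct (polar_unique g (cx t, cy t) E F Hg HE HF) as [Er Ep].
  - rewrite Hq. field. lra.
  - unfold fA. rewrite Hq. unfold fZ, cy; cbn [snd]. unfold YY. fold tau F E.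
    replace (/ 2 * g) with (kk g * fh g) by (rewrite <- (gk g Hg); field).
    field. lra.
  - split; auto. rewrite K_eq, Er, Ep. unfold E. rewrite <- exp_plus.
    replace (- kk g * F + kk g * F) with 0 by ring. apply exp_0.
Qed.

Lemma XX2_ex t : ex_derive (XX2 (kk g) (fh g) N) t.
Proof. unfold XX2, pp2, pp1, pp. auto_derive. auto. Qed.
Lemma YY2_ex t : ex_derive (YY2 (kk g) N) t.
Proof. unfold YY2, pp2, pp1, pp. auto_derive. auto. Qed.

Lemma hpos : 0 < fh g.
Proof. apply h_pos; auto. Qed.

Lemma cx_d t : is_derive cx t (cx1 t).
Proof. unfold cx, cx1. apply odd_D. intros; apply XX_d. apply hpos.
  apply (XX_ends _ _ _ m); auto; apply hpos. apply (XX_ends _ _ _ m); auto; apply hpos. Qed.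
Lemma cy_d t : is_derive cy t (cy1 t).
Proof. unfold cy, cy1. apply even_D. intros; apply YY_d.
  apply (YY1_ends _ _ m); auto. apply (YY1_ends _ _ m); auto. Qed.
Lemma cx1_d t : is_derive cx1 t (cx2 t).
Proof. unfold cx1, cx2. apply even_D. intros; apply XX1_d. apply hpos.
  apply (XX2_ends _ _ _ m); auto; apply hpos. apply (XX2_ends _ _ _ m); auto; apply hpos. Qed.
Lemma cy1_d t : is_derive cy1 t (cy2 t).
Proof. unfold cy1, cy2. apply odd_D. intros; apply YY1_d.
  apply (YY1_ends _ _ m); auto. apply (YY1_ends _ _ m); auto. Qed.
Lemma cx2_c t : continuous cx2 t.
Proof. unfold cx2. apply odd_C. apply XX2_ex.
  apply (XX2_ends _ _ _ m); auto; apply hpos. apply (XX2_ends _ _ _ m); auto; apply hpos. Qed.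
Lemma cy2_c t : continuous cy2 t.
Proof. unfold cy2. apply even_C. apply YY2_ex. Qed.

Lemma c_per t : cx (t + 2 * PI) = cx t /\ cy (t + 2 * PI) = cy t.
Proof. unfold cx, cy. rewrite al_per, sg_per. auto. Qed.

Lemma num_pos t : 0 < cx1 t * cy2 t - cy1 t * cx2 t.
Proof.
  unfold cx1, cy2, cy1, cx2.
  replace (XX1 (kk g) (fh g) N (al t) * YY2 (kk g) N (al t) -
    sg t * YY1 (kk g) N (al t) * (sg t * XX2 (kk g) (fh g) N (al t))) with
    (XX1 (kk g) (fh g) N (al t) * YY2 (kk g) N (al t) -
     (sg t * sg t) * (YY1 (kk g) N (al t) * XX2 (kk g) (fh g) N (al t))) by ring.
  rewrite sg_sq, Rmult_1_l.
  apply curv_pos. apply hpos. auto.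
Qed.

Lemma speed_pos t : 0 < cx1 t ^ 2 + cy1 t ^ 2.
Proof.
  pose proof (num_pos t).
  destruct (Req_dec (cx1 t) 0) as [A|A].
  - destruct (Req_dec (cy1 t) 0) as [B|B].
    + rewrite A, B in H. lra.
    + assert (0 < cy1 t ^ 2) by (replace (cy1 t ^ 2) with (Rsqr (cy1 t)) by (unfold Rsqr; ring); apply Rsqr_pos_lt; auto).
      pose proof (pow2_ge_0 (cx1 t)). lra.
  - assert (0 < cx1 t ^ 2) by (replace (cx1 t ^ 2) with (Rsqr (cx1 t)) by (unfold Rsqr; ring); apply Rsqr_pos_lt; auto).
    pose proof (pow2_ge_0 (cy1 t)). lra.
Qed.

Lemma curv_pos_all t : 0 < curvature (cx1 t) (cy1 t) (cx2 t) (cy2 t).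
Proof.
  unfold curvature, Rpower. apply Rdiv_lt_0_compat. apply num_pos. apply exp_pos.
Qed.

Lemma cos0_pp tau : -(PI/2) <= tau <= PI/2 -> cos (pp (kk g) N tau) = 0 ->
  tau = PI/2 \/ tau = -(PI/2).
Proof.
  intros Ht Hc. pose proof (pp_range _ _ m HNm Hk tau Ht).
  destruct (pp_top _ _ m HNm Hk) as [T _]. destruct (pp_bot _ _ m HNm Hk) as [B _].
  destruct (Req_dec (pp (kk g) N tau) (PI/2)) as [E|E].
  - left. apply (pp_inj _ _ Hk). rewrite E, T. auto.
  - destruct (Req_dec (pp (kk g) N tau) (-(PI/2))) as [E'|E'].
    + right. apply (pp_inj _ _ Hk). rewrite E', B. auto.
    + exfalso. assert (0 < cos (pp (kk g) N tau)) by (apply cos_gt_0; lra). lra.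
Qed.

Lemma curve_inj s t : 0 <= s < 2 * PI -> 0 <= t < 2 * PI -> cx s = cx t -> cy s = cy t -> s = t.
Proof.
  intros Hs Ht E1 E2.
  destruct (curve_polar s) as [_ Ps]. destruct (curve_polar t) as [_ Pt].
  rewrite E1, E2, Pt in Ps.
  apply (pp_inj _ _ Hk) in Ps.
  assert (Cst : cos s = cos t).
  { unfold al in Ps. destruct (acos_facts s) as [A _]. destruct (acos_facts t) as [B _].
    rewrite <- A, <- B. f_equal. lra. }
  assert (Sq : sin s * sin s = sin t * sin t).
  { pose proof (sin2_cos2 s). pose proof (sin2_cos2 t). unfold Rsqr in *. rewrite Cst in H. lra. }
  apply sincos_inj; auto.
  destruct (Req_dec (sin s) (sin t)) as [Q|Q]; auto. exfalso.
  assert (Q2 : sin s = - sin t) by nra.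
  assert (Hn : sin s <> 0) by (intro; apply Q; nra).
  assert (Sg : sg s = - sg t).
  { unfold sg. destruct (Rle_dec 0 (sin s)); destruct (Rle_dec 0 (sin t)); try ring; exfalso; lra. }
  unfold cx in E1. rewrite Sg, <- Ps in E1.
  assert (X0 : XX (kk g) (fh g) N (al t) = 0).
  { assert (sg t <> 0) by (unfold sg; destruct Rle_dec; lra).
    apply (Rmult_eq_reg_l (sg t)); auto. rewrite Rmult_0_r.
    set (w := sg t * XX (kk g) (fh g) N (al t)) in *.
    replace (- sg t * XX (kk g) (fh g) N (al t)) with (- w) in E1 by (unfold w; ring). lra. }
  unfold XX in X0. pose proof hpos. pose proof (exp_pos (- kk g * pp (kk g) N (al t))).
  assert (cos (pp (kk g) N (al t)) = 0).
  { apply (Rmult_eq_reg_l (exp (- kk g * pp (kk g) N (al t)))). 2: lra.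
    apply (Rmult_eq_reg_r (/ fh g)). 2: apply Rgt_not_eq, Rinv_0_lt_compat; lra.
    rewrite Rmult_0_r, Rmult_0_l. exact X0. }
  apply cos0_pp in H1. 2: apply al_range.
  rewrite Ps in H1. unfold al in H1.
  destruct (acos_facts s) as [A _].
  assert (cos s = 1 \/ cos s = -1).
  { destruct H1 as [H1|H1].
    - right. replace (acos (cos s)) with PI in A by lra. rewrite cos_PI in A. lra.
    - left. replace (acos (cos s)) with 0 in A by lra. rewrite cos_0 in A. lra. }
  pose proof (sin2_cos2 s). unfold Rsqr in H3. apply Hn. nra.
Qed.

Lemma curve_onto P : Kfin g P = 1 -> exists t, P = (cx t, cy t).
Proof.
  intros HK. pose proof hpos as Hh. pose proof PI_RGT_0.
  destruct (polar g P Hg) as [HP [Hu [Hv Ho]]].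
  destruct (pp_top _ _ m HNm Hk) as [T _]. destruct (pp_bot _ _ m HNm Hk) as [B _].
  destruct (IVT_gen (pp (kk g) N) (-(PI/2)) (PI/2) (fPhi g P) (pp_cont _ _)) as [tau [Htau Ftau]].
  { rewrite T, B. rewrite Rmin_left, Rmax_right by lra. lra. }
  rewrite Rmin_left, Rmax_right in Htau by lra.
  rewrite K_eq in HK.
  set (r := sqrt (fB g P)) in *. set (F := fPhi g P) in *.
  assert (Hr : r = exp (- kk g * F)).
  { apply (Rmult_eq_reg_r (exp (kk g * F))). 2: apply Rgt_not_eq, exp_pos.
    rewrite HK, <- exp_plus. replace (- kk g * F + kk g * F) with 0 by ring. rewrite exp_0; auto. }
  assert (HX : XX (kk g) (fh g) N tau = fq P).
  { unfold XX. rewrite Ftau. fold F. rewrite <- Hr. apply (Rmult_eq_reg_l (fh g)). 2: lra.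
    rewrite Hu. field. lra. }
  assert (HY : YY (kk g) N tau = fZ P).
  { unfold YY. rewrite Ftau. fold F. rewrite <- Hr.
    assert (fh g * fq P = r * cos F) by auto.
    unfold fA in Hv. assert (/2 * g = kk g * fh g) by (rewrite <- (gk g Hg); field).
    rewrite H1 in Hv. nra. }
  destruct P as [x y]. unfold fq, fZ in *; cbn [fst snd] in *.
  destruct (Rle_dec 0 x) as [Hx|Hx].
  - exists (tau + PI/2).
    assert (Al : al (tau + PI/2) = tau).
    { unfold al. rewrite acos_cos by lra. ring. }
    assert (Sg : sg (tau + PI/2) = 1).
    { unfold sg. destruct Rle_dec; auto. exfalso. apply n. apply sin_ge_0; lra. }
    unfold cx, cy. rewrite Al, Sg, HX, HY. rewrite Rabs_right by lra. f_equal; ring.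
  - assert (Hq : 0 < Rabs x) by (apply Rabs_pos_lt; lra).
    specialize (Ho Hq). fold F in Ho.
    assert (Ht2 : -(PI/2) < tau < PI/2).
    { split.
      - destruct (Req_dec tau (-(PI/2))) as [E|E]; [|lra]. rewrite E, B in Ftau. lra.
      - destruct (Req_dec tau (PI/2)) as [E|E]; [|lra]. rewrite E, T in Ftau. lra. }
    exists (3 * PI / 2 - tau).
    assert (Al : al (3 * PI / 2 - tau) = tau).
    { unfold al. replace (3 * PI / 2 - tau) with (- (PI / 2 + tau) + 2 * INR 1 * PI) by (simpl; field).
      rewrite cos_period, cos_neg, acos_cos by lra. ring. }
    assert (Sg : sg (3 * PI / 2 - tau) = -1).
    { unfold sg. destruct Rle_dec; auto. exfalso.
      assert (sin (3 * PI / 2 - tau) < 0) by (apply sin_lt_0; lra). lra. }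
    unfold cx, cy. rewrite Al, Sg, HX, HY. rewrite Rabs_left by lra. f_equal; ring.
Qed.

End Curve.


Theorem theorem1p2 (g : R) (hg : -2 < g < 2) :
  strongly_convex_closed_curve (indicatrix g) (fun P => Kfin g P <= 1).
Proof.
  unfold strongly_convex_closed_curve.
  split. apply D_convex; auto.
  split. apply D_bounded; auto.
  split. intros P; apply D_boundary; auto.
  destruct (INR_unbounded (Rabs (kk g))) as [m Hm].
  pose proof (pos_INR m).
  assert (Hk : Rabs (kk g) < 2 * INR m) by lra.
  set (N := 2 * INR m) in *.
  assert (HNm : N = 2 * INR m) by reflexivity.
  exists (2 * PI), (cx g N), (cy g N), (cx1 g N), (cy1 g N), (cx2 g N), (cy2 g N).
  split. pose proof PI_RGT_0; lra.
  split. intros t. apply (c_per g N).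
  split. intros t. split. apply (cx_d g N m); auto.
    split. apply (cy_d g N m); auto.
    split. apply (cx1_d g N m); auto.
    split. apply (cy1_d g N m); auto.
    split. apply (cx2_c g N m); auto.
    apply (cy2_c g N); auto.
  split. intros s t Hs Ht E1 E2. apply (curve_inj g N m); auto.
  split. intros P. split.
    - intros HP. apply (curve_onto g N m); auto.
    - intros [t Ht]. subst P. unfold indicatrix. apply (curve_polar g N m); auto.
  split. intros t. apply (speed_pos g N); auto.
  intros t. apply (curv_pos_all g N); auto.
Qed.
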